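(* Let $f$ be a quadratic form in $s$ variables with integer coefficients, $b,a\in\mathbb{Z}$, and let $q_1,q_2,W_1,W_2$ be positive integers with $\gcd(q_1W_1,q_2W_2)=1$. Then $$S^\ast_{W_1W_2,b}(q_1q_2,a)=S^\ast_{W_1,b}(q_1,a\overline{q_2})\,S^\ast_{W_2,b}(q_2,a\overline{q_1}),$$ where $\overline{q_2}$ denotes an inverse of $q_2$ modulo $q_1$ and $\overline{q_1}$ an inverse of $q_1$ modulo $q_2$.
   Context: $e(z)=e^{2\pi iz}$. For positive integers $q,W$ and integers $a,b$, $$S^\ast_{W,b}(q,a)=\sum_{\substack{1\le c_1,\ldots,c_s\le qW\\ \gcd(c_j,q)=1,\ c_j\equiv b\ (\mathrm{mod}\ W)\ (1\le j\le s)}}e\Big(\frac{af(\mathbf{c})}{q}\Big).$$ *)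

(* Defs.v *)
From HB Require Import structures.
From mathcomp Require Import all_boot all_order all_algebra.
From mathcomp Require Import all_classical all_reals all_analysis.
From mathcomp Require Import complex.
Set Implicit Arguments. Unset Strict Implicit. Unset Printing Implicit Defensive.
Import Order.TTheory GRing.Theory Num.Theory.
Local Open Scope ring_scope.

Definition eC (R : realType) (x : R) : R[i] :=
  Complex (cos (2 * pi * x)) (sin (2 * pi * x)).

(* The integer quadratic form in s variables with coefficient matrix M:
   f(c) = sum_{i,j} M i j c_i c_j  (every integral quadratic form has this shape,
   e.g. with M upper triangular). *)
Definition qform (s : nat) (M : 'M[int]_s) (c : 'I_s -> int) : int :=
  \sum_(i < s) \sum_(j < s) M i j * c i * c j.

(* S^*_{W,b}(q,a): the sum over c in [1, qW]^s, represented as c j = (k j).+1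
   with k : {ffun 'I_s -> 'I_(q*W)}, subject to gcd(c_j,q)=1 and c_j = b mod W. *)
Definition Sstar (R : realType) (s : nat) (M : 'M[int]_s)
    (W : nat) (b : int) (q : nat) (a : int) : R[i] :=
  \sum_(k : {ffun 'I_s -> 'I_(q * W)} |
          [forall j, coprime (k j).+1 q && ((Posz (k j).+1 == b %[mod Posz W])%Z)])
     eC ((a * qform M (fun j => Posz (k j).+1))%:~R / q%:R).

(* Main.v *)
Require Import Defs.
From HB Require Import structures.
From mathcomp Require Import all_boot all_order all_algebra.
From mathcomp Require Import all_classical all_reals all_analysis.
From mathcomp Require Import complex.
From mathcomp Require Import ring lra zify.
Import Order.TTheory GRing.Theory Num.Theory.
Local Open Scope ring_scope.

Lemma eC_add (R : realType) (x y : R) : eC (x + y) = eC x * eC y.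
Proof.
rewrite /eC mulrDr cosD sinD /=.
congr Complex; ring.
Qed.

Lemma eC0 (R : realType) : eC (0 : R) = 1.
Proof. by rewrite /eC mulr0 cos0 sin0. Qed.

Lemma eC_nat (R : realType) (n : nat) : eC (n%:R : R) = 1.
Proof.
elim: n => [|n IH]; first exact: eC0.
rewrite -addn1 natrD eC_add IH mul1r /eC mulr1.
have -> : 2 * pi = pi *+ 2 :> R by rewrite mulr_natl.
by rewrite cos2pi sin2pi.
Qed.

Lemma eC_int (R : realType) (n : int) : eC (n%:~R : R) = 1.
Proof.
case: n => n; first exact: eC_nat.
rewrite NegzE mulrNz.
have := @eC_add R (- (n.+1%:R : R)) (n.+1%:R).
by rewrite addNr eC0 eC_nat mulr1 => <-.
Qed.

Lemma eC_addz (R : realType) (x : R) (n : int) : eC (x + n%:~R) = eC x.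
Proof. by rewrite eC_add eC_int mulr1. Qed.

Lemma modzM2 (m x y u v : int) : (x = y %[mod m])%Z -> (u = v %[mod m])%Z ->
  (x * u = y * v %[mod m])%Z.
Proof. by move=> H1 H2; rewrite -modzMm H1 H2 modzMm. Qed.

Lemma modzD2 (m x y u v : int) : (x = y %[mod m])%Z -> (u = v %[mod m])%Z ->
  (x + u = y + v %[mod m])%Z.
Proof. by move=> H1 H2; rewrite -modzDm H1 H2 modzDm. Qed.

Lemma qform_mod s (M : 'M[int]_s) (m : int) c c' :
  (forall j, (c j = c' j %[mod m])%Z) -> (qform M c = qform M c' %[mod m])%Z.
Proof.
move=> H; rewrite /qform.
apply: (big_ind2 (fun x y => (x = y %[mod m])%Z)) => //; first exact: modzD2.
move=> i _.
apply: (big_ind2 (fun x y => (x = y %[mod m])%Z)) => //; first exact: modzD2.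
move=> j _.
by apply: modzM2 => //; apply: modzM2.
Qed.

Lemma coprimez_nat (m n : nat) : coprimez m n = coprime m n.
Proof. by rewrite /coprimez /gcdz /coprime. Qed.

Lemma phase (R : realType) s (M : 'M[int]_s) (a : int) (q1 q2 : nat)
  (c c1 c2 : 'I_s -> int) (q2bar q1bar : int) :
  (0 < q1)%N -> (0 < q2)%N -> coprime q1 q2 ->
  (q2bar * Posz q2 == 1 %[mod Posz q1])%Z ->
  (q1bar * Posz q1 == 1 %[mod Posz q2])%Z ->
  (forall j, (c j = c1 j %[mod Posz q1])%Z) ->
  (forall j, (c j = c2 j %[mod Posz q2])%Z) ->
  eC ((a * qform M c)%:~R / (q1 * q2)%:R : R) =
  eC ((a * q2bar * qform M c1)%:~R / q1%:R) *
  eC ((a * q1bar * qform M c2)%:~R / q2%:R).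
Proof.
move=> q1p q2p cop h2 h1 Hc1 Hc2.
set A := a * qform M c; set F1 := qform M c1; set F2 := qform M c2.
set D := A - a * q2bar * F1 * q2 - a * q1bar * F2 * q1.
have k1 : (q1 %| qform M c - F1)%Z by rewrite -eqz_mod_dvd; apply/eqP; apply: qform_mod.
have k2 : (q2 %| qform M c - F2)%Z by rewrite -eqz_mod_dvd; apply/eqP; apply: qform_mod.
move: h2 h1; rewrite eq_sym eqz_mod_dvd => h2; rewrite eq_sym eqz_mod_dvd => h1.
have d1 : (q1 %| D)%Z.
  have -> : D = a * (qform M c - F1) + (a * F1) * (1 - q2bar * q2) - (a * q1bar * F2) * q1.
    by rewrite /D /A; ring.
  by rewrite rpredB ?rpredD ?dvdz_mull ?dvdzz.
have d2 : (q2 %| D)%Z.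
  have -> : D = a * (qform M c - F2) + (a * F2) * (1 - q1bar * q1) - (a * q2bar * F1) * q2.
    by rewrite /D /A; ring.
  by rewrite rpredB ?rpredD ?dvdz_mull ?dvdzz.
have d12 : (Posz q1 * Posz q2 %| D)%Z by rewrite Gauss_dvdz ?coprimez_nat // d1 d2.
have E : A = a * q2bar * F1 * q2 + a * q1bar * F2 * q1 + (D %/ (Posz q1 * Posz q2))%Z * (Posz q1 * Posz q2).
  by rewrite divzK // /D; ring.
have ER := congr1 (fun z : int => z%:~R : R) E; move: ER => /=.
rewrite !(intrD, intrM) -!pmulrn => ->.
rewrite -eC_add -(eC_addz _ (_ + _) (D %/ (Posz q1 * Posz q2))%Z); congr eC.
have q1n : (q1%:R : R) != 0 by rewrite pnatr_eq0 -lt0n.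
have q2n : (q2%:R : R) != 0 by rewrite pnatr_eq0 -lt0n.
rewrite natrM; field.
by rewrite q1n q2n.
Qed.

Lemma modS_dvd (x m d : nat) : (d %| m)%N -> ((x %% m).+1 = x.+1 %[mod d])%N.
Proof.
move=> dm; rewrite -[x.+1]addn1 -[(x %% m).+1]addn1 -modnDml (modn_dvdm _ dm) modnDml //.
Qed.

Lemma modS_dvdz (x m d : nat) : (d %| m)%N -> (Posz (x %% m).+1 = Posz x.+1 %[mod Posz d])%Z.
Proof. by move=> dm; rewrite !modz_nat modS_dvd. Qed.

Theorem lemma2p1 (R : realType) (s : nat) (M : 'M[int]_s) (b a : int)
    (q1 q2 W1 W2 : nat) :
  (0 < q1)%N -> (0 < q2)%N -> (0 < W1)%N -> (0 < W2)%N ->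
  coprime (q1 * W1) (q2 * W2) ->
  forall q2bar q1bar : int,
  (q2bar * Posz q2 == 1 %[mod Posz q1])%Z ->
  (q1bar * Posz q1 == 1 %[mod Posz q2])%Z ->
  Sstar R M (W1 * W2) b (q1 * q2) a =
  Sstar R M W1 b q1 (a * q2bar) * Sstar R M W2 b q2 (a * q1bar).
Proof.
move=> q1p q2p W1p W2p cop q2bar q1bar h2 h1.
have m1p : (0 < q1 * W1)%N by rewrite muln_gt0 q1p.
have m2p : (0 < q2 * W2)%N by rewrite muln_gt0 q2p.
have EN : (q1 * q2 * (W1 * W2) = (q1 * W1) * (q2 * W2))%N by rewrite mulnACA.
have cq : coprime q1 q2.
  by move: cop; rewrite coprimeMl coprimeMr coprimeMr => /andP[/andP[]].
have cW : coprime W1 W2.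
  by move: cop; rewrite coprimeMl coprimeMr coprimeMr => /andP[_ /andP[]].
pose h (k : {ffun 'I_s -> 'I_(q1 * q2 * (W1 * W2))}) :
  {ffun 'I_s -> 'I_(q1 * W1)} * {ffun 'I_s -> 'I_(q2 * W2)} :=
  ([ffun j => Ordinal (ltn_pmod (k j) m1p)], [ffun j => Ordinal (ltn_pmod (k j) m2p)]).
have hbij : bijective h.
  apply: inj_card_bij; last by rewrite card_prod !card_ffun !card_ord -expnMn EN.
  move=> k k' /= [E1 E2]; apply/ffunP => j.
  have e1 : (k j %% (q1 * W1) = k' j %% (q1 * W1))%N.
    by have := congr1 (fun f : {ffun 'I_s -> 'I_(q1 * W1)} => val (f j)) E1; rewrite !ffunE.
  have e2 : (k j %% (q2 * W2) = k' j %% (q2 * W2))%N.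
    by have := congr1 (fun f : {ffun 'I_s -> 'I_(q2 * W2)} => val (f j)) E2; rewrite !ffunE.
  have := chinese_remainder cop (k j) (k' j).
  rewrite -EN (modn_small (ltn_ord (k j))) (modn_small (ltn_ord (k' j))) e1 e2 !eqxx => /eqP ?; exact: val_inj.
rewrite /Sstar big_distrlr /= pair_big_dep /=.
rewrite [RHS](reindex h) /=; last exact: onW_bij.
apply: eq_big => k.
  have Ej : forall j, (coprime (k j).+1 (q1 * q2) && ((Posz (k j).+1 == b %[mod Posz (W1 * W2)])%Z)) =
    (coprime (k j %% (q1 * W1)).+1 q1 && (Posz (k j %% (q1 * W1)).+1 == b %[mod Posz W1])%Z) &&
    (coprime (k j %% (q2 * W2)).+1 q2 && (Posz (k j %% (q2 * W2)).+1 == b %[mod Posz W2])%Z).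
    move=> j.
    have c1 : coprime (k j %% (q1 * W1)).+1 q1 = coprime (k j).+1 q1.
      by rewrite -coprime_modl (@modS_dvd _ _ _ (dvdn_mulr W1 (dvdnn q1))) coprime_modl.
    have c2 : coprime (k j %% (q2 * W2)).+1 q2 = coprime (k j).+1 q2.
      by rewrite -coprime_modl (@modS_dvd _ _ _ (dvdn_mulr W2 (dvdnn q2))) coprime_modl.
    have w1 : (Posz (k j %% (q1 * W1)).+1 == b %[mod Posz W1])%Z = (Posz (k j).+1 == b %[mod Posz W1])%Z.
      by rewrite (@modS_dvdz _ _ _ (dvdn_mull q1 (dvdnn W1))).
    have w2 : (Posz (k j %% (q2 * W2)).+1 == b %[mod Posz W2])%Z = (Posz (k j).+1 == b %[mod Posz W2])%Z.
      by rewrite (@modS_dvdz _ _ _ (dvdn_mull q2 (dvdnn W2))).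
    rewrite c1 c2 w1 w2 coprimeMr !eqz_mod_dvd PoszM Gauss_dvdz ?coprimez_nat //.
    by case: (coprime _ q1); case: (coprime _ q2); case: (Posz W1 %| _)%Z; case: (Posz W2 %| _)%Z.
  apply/forallP/andP => [H | [/forallP H1 /forallP H2]].
    by split; apply/forallP => j; rewrite !ffunE /=; move: (H j); rewrite Ej => /andP[].
  move=> j; rewrite Ej; move: (H1 j) (H2 j); rewrite !ffunE /= => -> ->; done.
move=> _.
apply: phase => // j; rewrite ffunE /=; apply/esym; apply: modS_dvdz.
  exact: dvdn_mulr.
exact: dvdn_mulr.
Qed.
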